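(* Let $A\neq 0$ be a real symmetric $n\times n$ matrix such that $$\mathbb{1}^\top A\mathbb{1}\ge\sqrt{(n-k)^2+k^2}\,\|A\|_F$$ for some integer $k$ with $1\le k<n/2$. Then the spectral radius $\rho(A)$ is a simple eigenvalue of $A$ (equal to its largest eigenvalue), and a corresponding eigenvector can be chosen (up to sign) so that it has at least $n-k+1$ nonnegative entries, of which at least $n-k$ are strictly positive.
   Context: $\mathbb{1}\in\mathbb{R}^n$ is the all-ones vector and $\|A\|_F=\sqrt{\mathrm{tr}(AA^\top)}$ is the Frobenius norm. *)

(* Defs.v *)
(* Real numbers are modelled by an arbitrary real closed field. *)
From HB Require Import structures.
From mathcomp Require Import all_boot all_order all_algebra.
Set Implicit Arguments. Unset Strict Implicit. Unset Printing Implicit Defensive.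
Import Order.TTheory GRing.Theory Num.Theory.
Local Open Scope ring_scope.

Definition frob_norm (R : rcfType) (n : nat) (A : 'M[R]_n) : R :=
  Num.sqrt (\tr (A *m A^T)).

Definition ones_form (R : rcfType) (n : nat) (A : 'M[R]_n) : R :=
  (\sum_(i < n) \sum_(j < n) A i j).

Definition alg_mult (R : rcfType) (n : nat) (A : 'M[R]_n) (a : R) : nat :=
  mup a (char_poly A).

(* Main.v *)
Require Import Defs.
From HB Require Import structures.
From mathcomp Require Import all_boot all_order all_algebra.
From mathcomp Require Import sesquilinear spectral.
From mathcomp.real_closed Require Import complex.
From mathcomp Require Import ring lra zify.
Import Order.TTheory GRing.Theory Num.Theory.
Local Open Scope ring_scope.
Section R.
Variable R : rcfType.

Lemma ineq1 (c2 N F2 S l : R) : N^+2 < 2 * c2 -> 0 < F2 -> c2 * F2 <= S^+2 -> 0 <= S ->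
  S <= l * N -> 0 <= N -> 2 * l^+2 <= F2 -> False.
Proof.
move=> h1 h2 h3 h4 h5 h6 h7.
have h8 : S^+2 <= l^+2 * N^+2 by nra.
have h9 : 2 * l^+2 * N^+2 <= F2 * N^+2 by nra.
have h10 : N^+2 * F2 < 2 * c2 * F2 by nra.
nra.
Qed.

Lemma ineq2 (c2 N X Y l mu F2 S : R) : 2 * X <= N -> X + Y = N -> 0 <= mu -> mu < l ->
  l^+2 + mu^+2 <= F2 -> c2 * F2 <= S^+2 -> 0 <= S -> S <= l * X + mu * Y -> N^+2 < 2 * c2 -> False.
Proof.
move=> h1 h2 h3 h4 h5 h6 h7 h8 h9.
have U1 : 2 * (l * X + mu * Y) <= N * (l+mu) by nra.
have U0 : 0 <= l * X + mu * Y by lra.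
have U2 : 4 * (l * X + mu * Y)^+2 <= N^+2 * (l+mu)^+2.
  have Z1 : 0 <= N * (l+mu) - 2 * (l * X + mu * Y) by lra.
  have Z2 : 0 <= N * (l+mu) + 2 * (l * X + mu * Y) by lra.
  have := mulr_ge0 Z1 Z2. nra.
have U3 : (l+mu)^+2 <= 2 * (l^+2+mu^+2) by nra.
have P0 : 0 < l^+2+mu^+2 by nra.
have U4 : N^+2 * (l^+2+mu^+2) < 2 * c2 * (l^+2+mu^+2) by rewrite ltr_pM2r.
have U5 : c2 * (l^+2+mu^+2) <= (l * X + mu * Y)^+2.
  have : c2 * (l^+2+mu^+2) <= c2 * F2 by nra.
  nra.
nra.
Qed.

Lemma ineq3 (a b X Y l mu F2 S : R) : b < X -> X < a -> X + Y = a + b -> 0 <= mu ->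
  l^+2 + mu^+2 <= F2 -> (a^+2 + b^+2) * F2 <= S^+2 -> 0 <= S -> S <= l * X + mu * Y -> 0 < l -> False.
Proof.
move=> h1 h2 h3 h4 h5 h6 h7 h8 h9.
have V1 : X^+2 + Y^+2 < a^+2 + b^+2 by nra.
have V2 : (l * X + mu * Y)^+2 <= (l^+2+mu^+2) * (X^+2+Y^+2).
  rewrite -subr_ge0.
  have -> : (l^+2+mu^+2) * (X^+2+Y^+2) - (l * X + mu * Y)^+2 = (l * Y - mu * X)^+2 by ring.
  exact: sqr_ge0.
have P0 : 0 < l^+2+mu^+2 by nra.
have V3 : (l^+2+mu^+2) * (X^+2+Y^+2) < (l^+2+mu^+2) * (a^+2+b^+2) by rewrite ltr_pM2l.
have V4 : (a^+2+b^+2) * (l^+2+mu^+2) <= (l * X + mu * Y)^+2.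
  have : (a^+2+b^+2) * (l^+2+mu^+2) <= (a^+2+b^+2) * F2 by nra.
  nra.
nra.
Qed.

Lemma key n k (e x : 'I_n -> R) (m : 'I_n) (S F2 : R) :
  (forall i, 0 <= x i) -> \sum_i x i = n%:R -> S = \sum_i e i * x i ->
  F2 = \sum_i e i ^+ 2 -> 0 < F2 ->
  (((n - k)%N)%:R ^+ 2 + k%:R ^+ 2) * F2 <= S ^+ 2 -> 0 <= S -> (2 * k < n)%N -> (1 <= k)%N ->
  (forall i, e i <= e m) ->
  (forall j, j != m -> `|e j| < e m) /\ ((n - k)%N)%:R <= x m.
Proof.
move=> x0 sx hS hF F0 hc S0 hkn hk1 em.
set a : R := ((n - k)%N)%:R; set b : R := k%:R; set N : R := n%:R.
have hN : N = a + b by rewrite /N /a /b -natrD subnK //; lia.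
have hab : b < a by rewrite /a /b ltr_nat; lia.
have b0 : 0 <= b by rewrite /b ler0n.
have hc2 : N ^+ 2 < 2 * (a ^+ 2 + b ^+ 2) by rewrite hN; nra.
have Sle : S <= e m * N.
  rewrite hS /N -sx mulr_sumr; apply: ler_sum => i _.
  by apply: ler_wpM2r; [exact: x0 | exact: em].
have F2ge j : j != m -> e m ^+ 2 + e j ^+ 2 <= F2.
  move=> hj; rewrite hF (bigD1 m) //= (bigD1 j) //= addrA lerDl.
  by apply: sumr_ge0 => i _; apply: sqr_ge0.
have N0 : 0 < N by rewrite /N ltr0n; lia.
have l0 : 0 <= e m by nra.
have part1 : forall j, j != m -> `|e j| < e m.
  move=> j hj; rewrite ltNge; apply/negP => hle.
  apply: (ineq1 (a ^+ 2 + b ^+ 2) N F2 S (e m)) => //.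
  have := F2ge j hj; rewrite -[e j ^+ 2]real_normK ?num_real //.
  have : e m ^+ 2 <= `|e j| ^+ 2 by rewrite ler_sqr // nnegrE.
  lra.
split => //.
have [j0 hj0] : exists j0 : 'I_n, j0 != m.
  have h0 : (0 < n)%N by lia.
  have h1 : (1 < n)%N by lia.
  case: (eqVneq (Ordinal h0) m) => [E|hne]; last by exists (Ordinal h0).
  by exists (Ordinal h1); rewrite -E; apply/eqP => /(congr1 val).
pose Pm : {pred 'I_n} := [pred j | j != m].
pose jm := Order.arg_max j0 Pm (fun j => `|e j|).
have [hjm hmax] : jm != m /\ forall j, j != m -> `|e j| <= `|e jm|.
  have hP : Pm j0 by [].
  rewrite /jm; case: (@arg_maxP _ _ _ j0 Pm (fun j => `|e j|) hP) => i hi H; split => //.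
set mu := `|e jm|.
set X := x m; set Y := \sum_(i | i != m) x i.
have hXY : X + Y = N by rewrite /N -sx (bigD1 m).
have hS' : S <= e m * X + mu * Y.
  rewrite hS (bigD1 m) //= lerD2l mulr_sumr; apply: ler_sum => i hi.
  apply: ler_wpM2r; first exact: x0.
  by apply: le_trans (hmax i hi); exact: ler_norm.
have hF' : e m ^+ 2 + mu ^+ 2 <= F2 by rewrite /mu real_normK ?num_real //; exact: F2ge.
have mu0 : 0 <= mu by rewrite /mu.
have mul : mu < e m by apply: part1.
rewrite leNgt; apply/negP => hX.
case: (boolP (2 * X <= N)) => h2.
  exact: (ineq2 _ _ _ _ _ _ _ _ h2 hXY mu0 mul hF' hc S0 hS' hc2).
apply: (ineq3 a b X Y (e m) mu F2 S) => //.
- lra.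
- by rewrite hXY.
- lra.
Qed.

Lemma CS (I : finType) (A : {pred I}) (f : I -> R) :
  (\sum_(i in A) f i) ^+ 2 <= #|A|%:R * \sum_(i in A) f i ^+ 2.
Proof.
set p : R := #|A|%:R; set s := \sum_(i in A) f i.
have E : \sum_(i in A) (p * f i - s) ^+ 2 = p * (p * \sum_(i in A) f i ^+ 2 - s ^+ 2).
  rewrite (eq_bigr (fun i => p ^+ 2 * f i ^+ 2 - (2 * p * s) * f i + s ^+ 2)); last by move=> i _; ring.
  rewrite big_split /= sumrB -!mulr_sumr sumr_const -/s -mulr_natr.
  rewrite -/p; ring.
have E0 : 0 <= p * (p * \sum_(i in A) f i ^+ 2 - s ^+ 2).
  by rewrite -E; apply: sumr_ge0 => i _; apply: sqr_ge0.
have p0 : 0 <= p by rewrite /p ler0n.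
case: (eqVneq p 0) => hp.
  have : #|A| = 0%N by apply/eqP; rewrite -(eqr_nat R) -/p hp.
  move=> hA0.
  have -> : s = 0 by rewrite /s big_pred0 // => i; rewrite (card0_eq hA0).
  by rewrite expr0n /= hp mul0r.
have pp : 0 < p by rewrite lt_def hp p0.
rewrite pmulr_rge0 // subr_ge0 in E0.
exact: E0.
Qed.

Lemma counting n k (w : 'I_n -> R) : (1 <= k)%N -> (k <= n)%N ->
  0 < \sum_i w i -> ((n - k)%N)%:R * \sum_i w i ^+ 2 <= (\sum_i w i) ^+ 2 ->
  (n - k <= #|[set i | (0 < w i)%R]|)%N /\ (n - k + 1 <= #|[set i | (0 <= w i)%R]|)%N.
Proof.
move=> hk1 hkn s0 hs.
set s : R := \sum_i w i in s0 hs; set s2 : R := \sum_i w i ^+ 2 in hs.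
set Pset := [set i | 0 < w i]; set p := #|Pset|.
set sP : R := \sum_(i in Pset) w i; set sP2 : R := \sum_(i in Pset) w i ^+ 2.
have hsplit : s = sP + \sum_(i in ~: Pset) w i.
  by rewrite /s (bigID (mem Pset)) /=; congr (_ + _); apply: eq_bigl => i; rewrite !inE.
have hneg : \sum_(i in ~: Pset) w i <= 0.
  by apply: sumr_le0 => i; rewrite !inE -leNgt.
have hsq : sP2 <= s2.
  rewrite /s2 (bigID (mem Pset)) /= lerDl; apply: sumr_ge0 => i _; exact: sqr_ge0.
have hcs : sP ^+ 2 <= p%:R * sP2 by apply: CS.
have hsP : s <= sP by lra.
have s2pos : 0 < s2.
  have H := @CS _ [pred i : 'I_n | true] w.
  have e1 : \sum_(i in [pred i : 'I_n | true]) w i = s by apply: eq_bigl.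
  have e2 : \sum_(i in [pred i : 'I_n | true]) w i ^+ 2 = s2 by apply: eq_bigl.
  rewrite e1 e2 in H.
  have s20 : 0 <= s2 by apply: sumr_ge0 => i _; exact: sqr_ge0.
  have N0 : 0 <= (#|[pred i : 'I_n | true]|)%:R :> R by rewrite ler0n.
  rewrite lt_def s20 andbT; apply/eqP => E; rewrite E mulr0 in H; nra.
have ps : 0 <= p%:R :> R by rewrite ler0n.
have c1 : sP2 * p%:R <= s2 * p%:R by apply: ler_wpM2r.
have sub : (p <= #|[set i | (0 <= w i)%R]|)%N.
  by apply: subset_leq_card; apply/subsetP => i; rewrite !inE => /ltW.
split.
  have : ((n - k)%N)%:R * s2 <= p%:R * s2 by nra.
  by rewrite ler_pM2r // ler_nat.
case: (pickP (fun i => w i < 0)) => [i0 hi0|H].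
  have i0in : i0 \in ~: Pset by rewrite !inE -leNgt ltW.
  have hneg' : \sum_(i in ~: Pset) w i < 0.
    rewrite (bigD1 i0) //=.
    have : \sum_(i in ~: Pset | i != i0) w i <= 0.
      by apply: sumr_le0 => i /andP[]; rewrite !inE -leNgt.
    lra.
  have hsP' : s < sP by lra.
  have : ((n - k)%N)%:R * s2 < p%:R * s2 by nra.
  rewrite ltr_pM2r // ltr_nat => h.
  apply: leq_trans sub; lia.
have -> : [set i | (0 <= w i)%R] = setT.
  by apply/setP => i; rewrite !inE leNgt; move: (H i) => /= ->.
rewrite cardsT card_ord; lia.
Qed.
End R.

Set Implicit Arguments. Unset Strict Implicit. Unset Printing Implicit Defensive.
Section S.
Variable R : rcfType.
Local Notation C := (Num.ClosedField.sort (complex_complex__canonical__Num_ClosedField R)).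
Local Notation rc := (real_complex R).
Local Open Scope sesquilinear_scope.

Lemma spec_real n (A : 'M[R]_n) : A^T = A ->
  exists (P : 'M[C]_n) (e : 'I_n -> R),
   [/\ P *m P^t* = 1%:M, P^t* *m P = 1%:M &
       map_mx rc A = P^t* *m diag_mx (\row_i rc (e i)) *m P].
Proof.
move=> hsym.
set Ac := map_mx rc A.
have Aherm : Ac \is hermsymmx.
  apply: realsym_hermsym.
    by apply/is_hermitianmxP; rewrite expr0 scale1r map_mx_id // /Ac map_trmx hsym.
  by apply/mxOverP => i j; rewrite mxE; apply/complex_realP; exists (A i j).
have Anorm := hermitian_normalmx Aherm.
have := orthomx_spectralP Anorm.
have PU := spectral_unitarymx Ac.
have dR := hermitian_spectral_diag_real Aherm.
set P := spectralmx Ac; set d := spectral_diag Ac => Aeq.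
exists P, (fun i => complex.Re (d 0 i)).
have PP : P *m P^t* = 1%:M by apply/unitarymxP.
have PV := invmx_unitary PU.
split => //.
  by rewrite -PV mulVmx // unitarymx_unit.
rewrite {1}Aeq PV; congr (_ *m diag_mx _ *m _).
apply/rowP => j; rewrite !mxE.
by rewrite RRe_real //; move/mxOverP: dR => /(_ 0 j).
Qed.

Lemma Re_sum (I : finType) (f : I -> C) :
  complex.Re (\sum_i f i) = \sum_i complex.Re (f i).
Proof.
elim/big_rec2: _ => // i a b _ <-.
by case: (f i) => [? ?]; case: b => [? ?].
Qed.

Lemma Re_mulr (a : C) (b : R) : complex.Re (a * rc b) = complex.Re a * b.
Proof. by case: a => a1 a2 /=; rewrite mulr0 subr0. Qed.

Lemma Re_rc (b : R) : complex.Re (rc b) = b.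
Proof. by []. Qed.

Lemma Re_normsq (a : C) :
  complex.Re (a * Num.conj a) = complex.Re a ^+ 2 + complex.Im a ^+ 2.
Proof. by case: a => a1 a2 /=; rewrite !expr2 mulrN opprK. Qed.

Lemma real_normsq (a : C) : rc (complex.Re (a * Num.conj a)) = a * Num.conj a.
Proof.
by apply: RRe_real; apply: ger0_real; apply: mul_conjC_ge0.
Qed.

Lemma trace_map n (M : 'M[R]_n) : rc (\tr M) = \tr (map_mx rc M).
Proof. by rewrite /mxtrace rmorph_sum; apply: eq_bigr => i _; rewrite mxE. Qed.

Lemma char_poly_sim (F : fieldType) n (Q Q' N : 'M[F]_n) :
  Q' *m Q = 1%:M -> char_poly (Q' *m N *m Q) = char_poly N.
Proof.
move=> hQ.
rewrite /char_poly /char_poly_mx.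
have -> : 'X%:M - map_mx polyC (Q' *m N *m Q) =
   map_mx polyC Q' *m ('X%:M - map_mx polyC N) *m map_mx polyC Q.
  by rewrite mulmxBr mulmxBl mul_mx_scalar -scalemxAl -!map_mxM hQ map_mx1 scalemx1.
by rewrite !det_mulmx mulrAC -det_mulmx -map_mxM hQ map_mx1 det1 mul1r.
Qed.

Lemma mup_map (p : {poly R}) (a : R) : p != 0 ->
  mup (rc a) (map_poly rc p) = mup a p.
Proof.
move=> p0; have p0' : map_poly rc p != 0 by rewrite map_poly_eq0.
apply/eqP; rewrite eqn_leq; apply/andP; split.
  rewrite mup_geq // -(dvdp_map rc) rmorphXn /= map_polyXsubC -mup_geq //.
rewrite mup_geq // -map_polyXsubC -rmorphXn /= dvdp_map -mup_geq //.
Qed.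

Section Main.
Variables (n : nat) (A : 'M[R]_n) (P : 'M[C]_n) (e : 'I_n -> R).
Hypotheses (hsym : A^T = A) (PP : P *m P^t* = 1%:M) (PP' : P^t* *m P = 1%:M).
Let D := diag_mx (\row_i rc (e i)).
Hypothesis (Aeq : map_mx rc A = P^t* *m D *m P).

Lemma trace_eq : \tr (A *m A^T) = \sum_i e i ^+ 2.
Proof.
apply: complexI; rewrite trace_map rmorph_sum hsym map_mxM Aeq.
rewrite -!mulmxA [P *m (P^t* *m _)]mulmxA PP mul1mx.
have -> : \tr (P^t* *m (D *m (D *m P))) = \tr (D *m (D *m P) *m P^t*) := mxtrace_mulC _ _.
rewrite -!mulmxA PP mulmx1.
rewrite /mxtrace; apply: eq_bigr => i _.
by rewrite /D mul_mx_diag !mxE eqxx mulr1n rmorphXn expr2.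
Qed.

Let u : 'rV[C]_n := const_mx 1.
Let c1 : 'cV[C]_n := const_mx 1.
Let y := P *m c1.
Definition xx i := complex.Re (y i 0 * Num.conj (y i 0)).

Lemma xx_ge0 i : 0 <= xx i.
Proof. by rewrite -lecR rmorph0 real_normsq mul_conjC_ge0. Qed.

Lemma yconj : y^t* = u *m P^t*.
Proof.
apply/rowP => i; rewrite !mxE rmorph_sum; apply: eq_bigr => j _.
by rewrite !mxE mulr1 mul1r.
Qed.

Lemma sum_form (M : 'M[C]_n) : (u *m M *m c1) 0 0 = \sum_i \sum_j M i j.
Proof.
rewrite !mxE exchange_big; apply: eq_bigr => j _.
by rewrite !mxE mulr1; apply: eq_bigr => i _; rewrite !mxE mul1r.
Qed.

Lemma sum_xx : \sum_i xx i = n%:R.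
Proof.
apply: complexI; rewrite rmorph_sum rmorph_nat.
transitivity ((y^t* *m y) 0 0).
  rewrite mxE; apply: eq_bigr => i _; rewrite /xx; apply: etrans (real_normsq _) _.
  by rewrite !mxE mulrC.
rewrite yconj /y mulmxA -[u *m _ *m P]mulmxA PP' mulmx1 !mxE.
by rewrite (eq_bigr (fun _ => 1)) ?sumr_const ?card_ord // => i _; rewrite !mxE mulr1.
Qed.

Lemma ones_eq : ones_form A = \sum_i e i * xx i.
Proof.
apply: complexI; rewrite /ones_form !rmorph_sum.
transitivity (\sum_i \sum_j (map_mx rc A) i j).
  by apply: eq_bigr => i _; rewrite rmorph_sum; apply: eq_bigr => j _; rewrite mxE.
rewrite -sum_form Aeq.
transitivity ((y^t* *m D *m y) 0 0).
  by rewrite yconj /y !mulmxA.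
rewrite mxE; apply: eq_bigr => i _.
rewrite mul_mx_diag !mxE rmorphM /= /xx real_normsq /y mxE; ring.
Qed.

Lemma eigvec m : exists w : 'rV[R]_n,
  [/\ w *m A = e m *: w, \sum_j w 0 j = xx m & \sum_j w 0 j ^+ 2 <= xx m].
Proof.
have PA : P *m map_mx rc A = D *m P by rewrite Aeq !mulmxA PP mul1mx.
pose z : 'rV[C]_n := Num.conj (y m 0) *: row m P.
have zA : z *m map_mx rc A = rc (e m) *: z.
  rewrite -scalemxAl -row_mul PA /z scalerA mulrC -scalerA; congr (_ *: _).
  by rewrite /D mul_diag_mx; apply/rowP => j; rewrite !mxE.
have zsum : \sum_j z 0 j = Num.conj (y m 0) * y m 0.
  rewrite /y mxE mulr_sumr; apply: eq_bigr => j _; rewrite !mxE mulr1.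
  done.
exists (map_mx (@complex.Re R) z); split.
- apply/rowP => j; have := congr1 (fun M : 'rV[C]_n => @complex.Re R (M 0 j)) zA.
  rewrite /= !mxE Re_sum mulrC Re_mulr mulrC => <-.
  by apply: eq_bigr => k _; rewrite !mxE Re_mulr.
- transitivity (@complex.Re R (\sum_j z 0 j)).
    by rewrite Re_sum; apply: eq_bigr => j _; rewrite mxE.
  by rewrite zsum /xx mulrC.
- apply: (le_trans (y := \sum_j @complex.Re R (z 0 j * Num.conj (z 0 j)))).
    apply: ler_sum => j _; rewrite Re_normsq mxE lerDl; exact: sqr_ge0.
  rewrite -Re_sum.
  have -> : \sum_j z 0 j * Num.conj (z 0 j) =
     Num.conj (y m 0) * y m 0 * (P *m P^t*) m m.
    rewrite [(P *m _) m m]mxE mulr_sumr; apply: eq_bigr => j _.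
    rewrite /z !mxE rmorphM /= conjCK.
    ring.
  by rewrite PP [1%:M m m]mxE eqxx mulr1n mulr1 mulrC.
Qed.

Lemma cancel_aux (F : fieldType) (q d b : F) : q != 0 -> q * d = b * q -> d = b.
Proof. by move=> q0; rewrite [b * _]mulrC => /(mulfI q0). Qed.

Lemma eigval a : eigenvalue A a -> exists j, e j = a.
Proof.
case/eigenvalueP => v vA v0.
pose vc := map_mx rc v; pose uu := vc *m P^t*.
have vcA : vc *m map_mx rc A = rc a *: vc by rewrite -map_mxM vA map_mxZ.
have uD : uu *m D = rc a *: uu.
  have := congr1 (fun M : 'rV[C]_n => M *m P^t*) vcA.
  by rewrite Aeq !mulmxA -[_ *m P *m P^t*]mulmxA PP mulmx1 -scalemxAl.
have uu0 : uu != 0.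
  apply/negP => /eqP H; move/negP: v0; apply.
  have : vc = uu *m P by rewrite /uu -mulmxA PP' mulmx1.
  by rewrite H mul0mx => /eqP; rewrite map_mx_eq0.
clearbody uu.
have [j uj] : exists j, uu 0 j != 0.
  case: (pickP (fun j => uu 0 j != 0)) => [j uj|H]; first by exists j.
  exfalso; move/negP: uu0; apply; apply/eqP; apply/rowP => j; rewrite [RHS]mxE; apply/eqP.
  by move: (H j) => /negbT; rewrite negbK.
exists j; apply: complexI.
have := congr1 (fun M : 'rV[C]_n => M 0 j) uD.
rewrite /D mul_mx_diag !mxE; exact: (cancel_aux uj).
Qed.

Lemma mult a : mup a (char_poly A) = count (fun j => e j == a) (index_enum 'I_n).
Proof.
rewrite -(mup_map _ (monic_neq0 (char_poly_monic A))) map_char_poly Aeq.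
rewrite char_poly_sim // char_poly_trig ?diag_mx_is_trig //.
rewrite (eq_bigr (fun i => 'X - (rc (e i))%:P)); last by move=> i _; rewrite /D !mxE eqxx mulr1n.
rewrite -(big_map (fun i => rc (e i)) xpredT (fun y => 'X - y%:P)) mu_prod_XsubC count_map.
by apply: eq_count => j /=; rewrite (inj_eq (@complexI R)).
Qed.
End Main.
End S.


Theorem theorem6 (R : rcfType) (n k : nat) (A : 'M[R]_n)
  (hsym : A^T = A) (hA : A != 0)
  (hk1 : (1 <= k)%N) (hkn : (2 * k < n)%N)
  (hcond : Num.sqrt (((n - k)%N)%:R ^+ 2 + k%:R ^+ 2) * frob_norm A
           <= ones_form A) :
  exists r : R,
    [/\ eigenvalue A r,
        (* r is the spectral radius rho(A) and the largest eigenvalue *)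
        (forall a : R, eigenvalue A a -> `|a| <= r),
        (* r is a simple eigenvalue *)
        alg_mult A r = 1%N &
        exists v : 'cV[R]_n,
          [/\ v != 0, A *m v = r *: v,
              (n - k + 1 <= #|[set i : 'I_n | (0 <= v i ord0)%R]|)%N &
              (n - k <= #|[set i : 'I_n | (0 < v i ord0)%R]|)%N]].
Proof.
have [P [e [PP PP' Aeq]]] := spec_real hsym.
have n0 : (0 < n)%N by lia.
pose i0 := Ordinal n0.
pose m := Order.arg_max i0 xpredT e.
have hm : forall i, e i <= e m.
  by rewrite /m; case: (@arg_maxP _ _ _ i0 xpredT e isT) => j _ H i; apply: H.
set F2 := \tr (A *m A^T).
have hF : F2 = \sum_i e i ^+ 2 := trace_eq hsym PP Aeq.
have F2E : F2 = \sum_i \sum_j A i j ^+ 2.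
  rewrite /F2 /mxtrace; apply: eq_bigr => i _; rewrite mxE; apply: eq_bigr => j _.
  by rewrite mxE expr2.
have F0 : 0 < F2.
  have F2ge : 0 <= F2 by rewrite F2E; apply: sumr_ge0 => i _; apply: sumr_ge0 => j _; exact: sqr_ge0.
  rewrite lt_def F2ge andbT; apply/eqP => E0.
  move/negP: hA; apply; apply/eqP/matrixP => i j; rewrite mxE.
  have le1 : A i j ^+ 2 <= F2.
    rewrite F2E (bigD1 i) //= (bigD1 j) //= -addrA lerDl addr_ge0 //.
      by apply: sumr_ge0 => l _; exact: sqr_ge0.
    by apply: sumr_ge0 => l _; apply: sumr_ge0 => l' _; exact: sqr_ge0.
  by apply/eqP; rewrite -sqrf_eq0 eq_le sqr_ge0 andbT -E0.
set c2 : R := ((n - k)%N)%:R ^+ 2 + k%:R ^+ 2.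
have c20 : 0 <= c2 by rewrite /c2 addr_ge0 // sqr_ge0.
set S := ones_form A in hcond.
have q0 : 0 <= Num.sqrt c2 * frob_norm A by rewrite mulr_ge0 // sqrtr_ge0.
have S0 : 0 <= S by apply: le_trans hcond.
have hc : c2 * F2 <= S ^+ 2.
  have : (Num.sqrt c2 * frob_norm A) ^+ 2 <= S ^+ 2 by rewrite ler_pXn2r // nnegrE.
  by rewrite exprMn /frob_norm !sqr_sqrtr // ltW.
have hS : S = \sum_i e i * xx P i := ones_eq Aeq.
have [part1 hxm] := key _ _ _ _ _ _ _ _ (xx_ge0 P) (sum_xx PP') hS hF F0 hc S0 hkn hk1 hm.
have [w [wA sw sw2]] := eigvec PP Aeq m.
have nk0 : 0 < ((n - k)%N)%:R :> R by rewrite ltr0n; lia.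
have sw0 : 0 < \sum_j w 0 j by rewrite sw; lra.
have w0 : w != 0.
  apply/negP => /eqP w0; move: sw0; rewrite w0.
  by rewrite (eq_bigr (fun _ => 0)) ?big1 ?ltxx // => j _; rewrite mxE.
have [j1 hj1] : exists j1 : 'I_n, j1 != m.
  have h1 : (1 < n)%N by lia.
  case: (eqVneq (Ordinal n0) m) => [E|hne]; last by exists (Ordinal n0).
  by exists (Ordinal h1); rewrite -E; apply/eqP => /(congr1 val).
have em0 : 0 < e m by apply: le_lt_trans (part1 j1 hj1).
exists (e m); split.
- by apply/eigenvalueP; exists w.
- move=> a /(eigval PP PP' Aeq) [j <-].
  case: (eqVneq j m) => [->|hj]; first by rewrite ger0_norm // ltW.
  exact: ltW (part1 j hj).
- rewrite /alg_mult (mult PP' Aeq).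
  rewrite (@eq_count _ _ (pred1 m)); first by rewrite count_uniq_mem ?index_enum_uniq ?mem_index_enum.
  move=> j /=; case: (eqVneq j m) => [->|hj]; first by rewrite eqxx.
  apply/negbTE; rewrite neq_lt; apply/orP; left.
  exact: le_lt_trans (ler_norm _) (part1 j hj).
- have hn : (k <= n)%N by apply: (leq_trans _ (ltnW hkn)); rewrite mul2n -addnn leq_addr.
  have hsq : ((n - k)%N)%:R * \sum_j w 0 j ^+ 2 <= (\sum_j w 0 j) ^+ 2.
    have H1 := ler_wpM2l (ltW nk0) sw2.
    have X0 : 0 <= xx P m by apply: xx_ge0.
    rewrite sw; apply: le_trans H1 _; rewrite expr2; exact: ler_wpM2r.
  have [cP cN] := @counting R n k (fun i => w 0 i) hk1 hn sw0 hsq.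
  exists w^T; split.
  + by rewrite trmx_eq0.
  + by rewrite -[A]hsym -trmx_mul wA linearZ.
  + suff -> : [set i | (0 <= w^T i ord0)%R] = [set i | (0 <= w 0 i)%R] by [].
    by apply/setP => i; rewrite !inE mxE.
  + suff -> : [set i | (0 < w^T i ord0)%R] = [set i | (0 < w 0 i)%R] by [].
    by apply/setP => i; rewrite !inE mxE.
Qed.
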